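(* Let $n\ge1$, $0\le k\le n$, and let $H$ be an operator on $(\mathbb{C}^2)^{\otimes n}$ that can be written as a sum of $k$-local terms. Then $$\mathrm{Tr}(HB_k)=2^{k-n}\,\mathrm{Tr}(HC_k),$$ and $\mathrm{Tr}(HB_r)=0$ for all $r$ with $k<r\le n$.
   Context: Qubits $1,\dots,n$, $Z_j$ the Pauli $Z$ on qubit $j$. An operator is $k$-local if it acts non-trivially on at most $k$ qubits. For $m=0,\dots,n$, $\Pi_m$ is the projector onto the span of computational basis states with exactly $m$ qubits in state $|1\rangle$. Define $C_0=I$ and for $l\ge1$, $C_l=\sum_{i_1<\cdots<i_l}Z_{i_1}\cdots Z_{i_l}$. For $0\le k\le n$ define $B_k=\sum_{m=0}^k(-1)^m\binom{n-m}{k-m}\Pi_m$. *)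

(* Defs.v *)
From Stdlib Require List.
From HB Require Import structures.
From mathcomp Require Import all_boot all_order all_algebra.
Set Implicit Arguments. Unset Strict Implicit. Unset Printing Implicit Defensive.
Import Order.TTheory GRing.Theory Num.Theory.
Local Open Scope ring_scope.

(* Computational basis of (C^2)^{⊗n}: a basis state |x_1 ... x_n> is encoded
   by the set of qubits (in 'I_n, i.e. qubits 0..n-1) that are in state |1>. *)
Definition basis (n : nat) := {set 'I_n}.

Definition op (C : numClosedFieldType) (n : nat) := basis n -> basis n -> C.

Section Ops.
Variables (C : numClosedFieldType) (n : nat).

Definition opI : op C n := fun x y => (x == y)%:R.
Definition opmul (A B : op C n) : op C n :=
  fun x y => \sum_(z : basis n) A x z * B z y.
Definition opTr (A : op C n) : C := \sum_(x : basis n) A x x.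

Definition Zop (j : 'I_n) : op C n :=
  fun x y => (x == y)%:R * (-1) ^+ (j \in x).

(* A acts non-trivially only on the qubits in S: A = A_S ⊗ I_{complement S}. *)
Definition acts_only_on (S : {set 'I_n}) (A : op C n) : Prop :=
  exists F : op C n,
    (forall x y x' y' : basis n, (forall i, i \in S -> (i \in x) = (i \in x') /\ (i \in y) = (i \in y')) ->
                       F x y = F x' y') /\
    (forall x y : basis n, A x y = if [forall i in ~: S, (i \in x) == (i \in y)] then F x y else 0).

Definition k_local (k : nat) (A : op C n) : Prop :=
  exists S : {set 'I_n}, (#|S| <= k)%N /\ acts_only_on S A.

Definition sum_of_k_local (k : nat) (H : op C n) : Prop :=
  exists s : seq (op C n), (forall A, List.In A s -> k_local k A) /\
    forall x y : basis n, H x y = \sum_(A <- s) A x y.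

Definition Pi (m : nat) : op C n := fun x y => ((x == y) && (#|x| == m))%:R.

Definition Cl (l : nat) : op C n :=
  fun x y => \sum_(S : {set 'I_n} | #|S| == l) (\big[opmul/opI]_(j in S) Zop j) x y.

Definition Bk (k : nat) : op C n :=
  fun x y => \sum_(m < k.+1) (-1) ^+ m * ('C(n - m, k - m))%:R * Pi m x y.

End Ops.

(* Main.v *)
Require Import Defs.
From mathcomp Require Import all_boot all_order all_algebra.
Import Order.TTheory GRing.Theory Num.Theory.
Local Open Scope ring_scope.
Set Implicit Arguments. Unset Strict Implicit.

Section Aux.
Variables (C : numClosedFieldType) (n : nat).
Implicit Types (x y z S T J R : {set 'I_n}).

Definition tg (j : 'I_n) x : {set 'I_n} := if j \in x then x :\ j else j |: x.

Lemma tg_in j x i : i != j -> (i \in tg j x) = (i \in x).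
Proof. by move=> ij; rewrite /tg; case: ifP => _; rewrite !inE (negPf ij). Qed.

Lemma tg_j j x : (j \in tg j x) = ~~ (j \in x).
Proof. by rewrite /tg; case: ifP => h; rewrite !inE ?eqxx ?h. Qed.

Lemma tgK j : involutive (tg j).
Proof.
move=> x; apply/setP=> i; case: (eqVneq i j) => [->|ij].
  by rewrite !tg_j negbK.
by rewrite !tg_in.
Qed.

Lemma tg_sign j x : (-1) ^+ #|tg j x| = - (-1) ^+ #|x| :> C.
Proof.
rewrite /tg; case: ifP => h.
  by rewrite [in RHS](cardsD1 j x) h exprD expr1 mulN1r opprK.
by rewrite cardsU1 h exprD expr1 mulN1r.
Qed.

Lemma invol_sum (P : pred {set 'I_n}) (g : {set 'I_n} -> C) j :
  (forall x, P (tg j x) = P x) -> (forall x, g (tg j x) = - g x) ->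
  \sum_(x | P x) g x = 0.
Proof.
move=> HP Hg; set s := (X in X = 0).
have E : s = - s.
  rewrite {1}/s (reindex_inj (can_inj (tgK j))) /= /s -sumrN.
  by apply: eq_big => [x|x _]; [exact: HP | exact: Hg].
have : s *+ 2 == 0 by rewrite mulr2n {1}E addNr.
by rewrite mulrn_eq0 /= => /eqP.
Qed.

Lemma sub_tg j x J : j \in J -> (tg j x \subset J) = (x \subset J).
Proof.
move=> jJ; apply/subsetP/subsetP => H i.
  case: (eqVneq i j) => [-> //|ij]; rewrite -(tg_in x ij); exact: H.
case: (eqVneq i j) => [-> //|ij]; rewrite (tg_in x ij); exact: H.
Qed.

Lemma capS_tg j x S : j \notin S -> tg j x :&: S = x :&: S.
Proof.
move=> jS; apply/setP=> i; rewrite !inE; case: (eqVneq i j) => [->|ij].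
  by rewrite (negPf jS) !andbF.
by rewrite tg_in.
Qed.


Lemma card_sup x r : (#|x| <= r)%N ->
  #|[set J : {set 'I_n} | (x \subset J) && (#|J| == r)]| = 'C(n - #|x|, r - #|x|).
Proof.
move=> le; have cC : #|~: x| = (n - #|x|)%N.
  have hx : (#|x| <= n)%N by have := max_card x; rewrite card_ord.
  by apply/eqP; rewrite -(eqn_add2l #|x|) cardsC card_ord subnKC.
rewrite -cC -cards_draws -(card_in_imset (f := fun J => J :\: x)).
  apply: eq_card => B; rewrite [in RHS]inE; apply/imsetP/andP.
    case=> J; rewrite inE => /andP[sxJ /eqP cJ] ->; split.
      by apply/subsetP=> i; rewrite !inE => /andP[].
    by rewrite cardsD (setIidPr sxJ) cJ.
  case=> sB /eqP cB; exists (B :|: x).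
    have d : B :&: x = set0.
      apply/setP=> i; rewrite !inE; case: (boolP (i \in B)) => iB //=.
      by have := subsetP sB i iB; rewrite inE => /negPf ->.
    by rewrite inE subsetUr /= cardsU d cards0 subn0 cB subnK.
  apply/setP=> i; rewrite !inE; case: (boolP (i \in B)) => iB /=.
    by have := subsetP sB i iB; rewrite inE => ->.
  by rewrite andNb.
move=> J1 J2; rewrite !inE => /andP[s1 _] /andP[s2 _] e.
apply/setP=> i; case: (boolP (i \in x)) => ix.
  by rewrite (subsetP s1) ?(subsetP s2).
by have := congr1 (fun A : {set 'I_n} => i \in A) e; rewrite /= !inE ix.
Qed.

Lemma card_fib S T : T \subset S ->
  #|[set x : {set 'I_n} | x :&: S == T]| = (2 ^ (n - #|S|))%N.
Proof.
move=> sTS; have cC : #|~: S| = (n - #|S|)%N.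
  have hx : (#|S| <= n)%N by have := max_card S; rewrite card_ord.
  by apply/eqP; rewrite -(eqn_add2l #|S|) cardsC card_ord subnKC.
rewrite -cC -card_powerset -(card_in_imset (f := fun x => x :\: S)).
  apply: eq_card => U; rewrite [in RHS]inE; apply/imsetP/idP.
    case=> x _ ->; by apply/subsetP=> i; rewrite !inE => /andP[].
  move=> sU; exists (U :|: T).
    rewrite inE; apply/eqP/setP=> i; rewrite !inE.
    case: (boolP (i \in U)) => iU /=.
      have := subsetP sU i iU; rewrite inE => iS; rewrite (negPf iS) /=.
      by apply/esym/negbTE/negP => /(subsetP sTS); rewrite (negPf iS).
    by case: (boolP (i \in T)) => //= /(subsetP sTS) ->.
  apply/setP=> i; rewrite !inE; case: (boolP (i \in U)) => iU /=.
    by have := subsetP sU i iU; rewrite inE => ->.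
  case: (boolP (i \in S)) => iS //=.
  by apply/esym/negbTE/negP => /(subsetP sTS); rewrite (negPf iS).
move=> x1 x2; rewrite !inE => /eqP e1 /eqP e2 e.
apply/setP=> i; case: (boolP (i \in S)) => iS.
  have := congr1 (fun A : {set 'I_n} => i \in A) (etrans e1 (esym e2)).
  by rewrite /= !inE iS !andbT.
by have := congr1 (fun A : {set 'I_n} => i \in A) e; rewrite /= !inE iS.
Qed.


Definition dB r x : C :=
  (-1) ^+ #|x| * (#|[set J : {set 'I_n} | (x \subset J) && (#|J| == r)]|)%:R.
Definition dC k x : C :=
  \sum_(R : {set 'I_n} | #|R| == k) \prod_(j in R) (-1) ^+ (j \in x).

Lemma pick_S S r (c : C) :
  \sum_(J : {set 'I_n} | #|J| == r) (if J == S then c else 0) = if #|S| == r then c else 0.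
Proof.
rewrite -big_mkcondr /=; case: (eqVneq #|S| r) => hS.
  rewrite (big_pred1 S) // => J; case: (eqVneq J S) => [->|h]; first by rewrite /= hS !eqxx.
  by rewrite /= (negPf h) andbF.
rewrite big_pred0 // => J; case: (eqVneq J S) => [->|]; rewrite ?andbF ?andbT //.
exact/negbTE.
Qed.

Lemma empty_fib S T (F : {set 'I_n} -> C) (Q : pred {set 'I_n}) : ~~ (T \subset S) ->
  \sum_(x | (x :&: S == T) && Q x) F x = 0.
Proof.
move=> sTS; rewrite big_pred0 // => x; apply/negbTE/negP => /andP[/eqP e _].
by move: sTS; rewrite -e subsetIr.
Qed.

Lemma LB S T r : (#|S| <= r)%N ->
  \sum_(x | x :&: S == T) dB r x =
  if (#|S| == r) && (T \subset S) then (-1) ^+ #|T| else 0.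
Proof.
move=> le.
have E x : dB r x = \sum_(J : {set 'I_n} | (x \subset J) && (#|J| == r)) (-1) ^+ #|x|.
  rewrite (eq_bigl (fun J => J \in [set J : {set 'I_n} | (x \subset J) && (#|J| == r)])).
    by rewrite sumr_const /dB mulr_natr.
  by move=> J; rewrite inE.
rewrite (eq_bigr _ (fun x _ => E x)) (exchange_big_dep (fun J : {set 'I_n} => #|J| == r)) /=;
  last by move=> x J _ /andP[].
rewrite (eq_bigr (fun J => if J == S then (if T \subset S then (-1) ^+ #|T| else 0) else 0)).
  by rewrite pick_S; case: (#|S| == r).
move=> J /eqP cJ; case: (boolP (J \subset S)) => sJS.
  have eJS : J = S by apply/eqP; rewrite eqEcard sJS cJ le.
  subst J; rewrite eqxx; case: (boolP (T \subset S)) => sTS.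
    rewrite (big_pred1 T) // => x; rewrite cJ eqxx andbT /=.
    apply/andP/eqP => [[/eqP e sxS]|->]; first by rewrite -e; apply/esym/setIidPl.
    by rewrite (setIidPl sTS) eqxx sTS.
  exact: (empty_fib (fun x => (-1) ^+ #|x|) (fun x => (x \subset S) && (#|S| == r)) sTS).
have nJS : J != S by apply: contraNneq sJS => ->; exact: subxx.
rewrite (negPf nJS); case/subsetPn: sJS => j jJ jS.
apply: (invol_sum (j := j)) => x; last exact: tg_sign.
by rewrite (capS_tg x jS) (sub_tg x jJ).
Qed.

Lemma prod_sign_flip R x j : j \in R ->
  \prod_(i in R) (-1) ^+ (i \in tg j x) = - \prod_(i in R) (-1) ^+ (i \in x) :> C.
Proof.
move=> jR; rewrite (bigD1 j jR) [X in _ = - X](bigD1 j jR) /= tg_j.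
rewrite (eq_bigr (fun i => (-1) ^+ (i \in x))); last first.
  by move=> i /andP[_ ij]; rewrite tg_in.
by case: (j \in x); rewrite /= ?expr0 ?expr1 ?mulN1r ?mul1r ?opprK.
Qed.

Lemma LC S T k : (#|S| <= k)%N ->
  \sum_(x | x :&: S == T) dC k x =
  if (#|S| == k) && (T \subset S) then (2 ^ (n - k))%:R * (-1) ^+ #|T| else 0.
Proof.
move=> le; rewrite /dC exchange_big /=.
rewrite (eq_bigr (fun J => if J == S then (if T \subset S then (2 ^ (n - k))%:R * (-1) ^+ #|T| else 0) else 0)).
  by rewrite pick_S; case: (#|S| == k).
move=> R /eqP cR; case: (boolP (R \subset S)) => sRS.
  have eRS : R = S by apply/eqP; rewrite eqEcard sRS cR le.
  subst R; rewrite eqxx; case: (boolP (T \subset S)) => sTS.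
    rewrite (eq_bigr (fun _ => (-1) ^+ #|T|)).
      rewrite (eq_bigl (fun x => x \in [set x : {set 'I_n} | x :&: S == T])); last first.
        by move=> x; rewrite inE.
      by rewrite sumr_const card_fib // cR mulr_natl.
    move=> x /eqP e.
    rewrite (eq_bigr (fun j => if j \in T then -1 else 1)); last first.
      by move=> j jS; rewrite -e inE jS andbT; case: (j \in x).
    rewrite -big_mkcondr /= (eq_bigl (fun j => j \in T)) ?prodr_const //.
    by move=> j; case jT: (j \in T); rewrite ?andbF ?andbT ?(subsetP sTS).
  rewrite (eq_bigl (fun x => (x :&: S == T) && xpredT x)) ?empty_fib //.
  by move=> x; rewrite andbT.
have nRS : R != S by apply: contraNneq sRS => ->; exact: subxx.
rewrite (negPf nRS); case/subsetPn: sRS => j jR jS.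
apply: (invol_sum (j := j)) => x; last exact: prod_sign_flip.
by rewrite (capS_tg x jS).
Qed.


Lemma Zprod R x y :
  (\big[@opmul C n/@opI C n]_(j in R) Zop C j) x y = (x == y)%:R * \prod_(j in R) (-1) ^+ (j \in x).
Proof.
pose K (D : op C n) (e : {set 'I_n} -> C) := forall x y, D x y = (x == y)%:R * e x.
have key : K (\big[@opmul C n/@opI C n]_(j in R) Zop C j)
   (\big[(fun e1 e2 x => e1 x * e2 x)/(fun _ => 1)]_(j in R) (fun x => (-1) ^+ (j \in x))).
  apply: big_ind2.
  - by move=> a b; rewrite /opI mulr1.
  - move=> D1 e1 D2 e2 h1 h2 a b; rewrite /opmul.
    transitivity (\sum_(z : {set 'I_n}) (a == z)%:R * e1 a * ((z == b)%:R * e2 z)).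
      by apply: eq_bigr => z _; rewrite (h1 a z) (h2 z b).
    rewrite (bigD1 a) // eqxx big1 ?mul1r /=; first by rewrite addr0 mulrCA.
    by move=> z za; rewrite eq_sym (negPf za) mul0r mul0r.
  - by move=> j _ a b; rewrite /Zop.
rewrite key; congr (_ * _).
by rewrite (big_morph (fun e : {set 'I_n} -> C => e x) (id1 := 1) (op1 := *%R)).
Qed.

Lemma tr_diag (H D : op C n) (d : {set 'I_n} -> C) :
  (forall z x, D z x = (z == x)%:R * d z) ->
  opTr (opmul H D) = \sum_(x : {set 'I_n}) H x x * d x.
Proof.
move=> hD; rewrite /opTr /opmul; apply: eq_bigr => x _.
rewrite (eq_bigr (fun z => H x z * ((z == x)%:R * d z))); last by move=> z _; rewrite hD.
rewrite (bigD1 x) // eqxx mul1r big1 /= ?addr0 // => z zx.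
by rewrite (negPf zx) mul0r mulr0.
Qed.

Lemma Bk_diag r z x : @Bk C n r z x = (z == x)%:R * dB r z.
Proof.
rewrite /Bk /Pi /=; case: (eqVneq z x) => [e|zx]; last first.
  by rewrite mul0r big1 // => m _; rewrite /= mulr0.
subst x; rewrite mul1r /dB; case: (leqP #|z| r) => hz.
  rewrite (bigD1 (Ordinal (hz : (#|z| < r.+1)%N))) // eqxx mulr1 big1 /= ?addr0.
    by rewrite card_sup.
  move=> m mz; suff -> : (#|z| == m) = false by rewrite mulr0.
  apply/negbTE; apply: contraNneq mz => e; apply/eqP/val_inj; by rewrite /= e.
have -> : #|[set J : {set 'I_n} | (z \subset J) && (#|J| == r)]| = 0%N.
  apply/eqP; rewrite cards_eq0; apply/eqP/setP=> J; rewrite !inE.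
  apply/negbTE/andP=> [[sJ /eqP cJ]]; have := subset_leq_card sJ.
  by rewrite cJ leqNgt hz.
rewrite mulr0 big1 // => m _; suff -> : (#|z| == m) = false by rewrite mulr0.
apply/negbTE; apply: contraTneq hz => ->; rewrite -leqNgt; exact: (ltn_ord m).
Qed.

Lemma Cl_diag k z x : @Cl C n k z x = (z == x)%:R * dC k z.
Proof. by rewrite /Cl /dC mulr_sumr; apply: eq_bigr => R _; rewrite Zprod. Qed.

Lemma term_decomp k (A : op C n) : k_local k A ->
  exists S (f : {set 'I_n} -> C), (#|S| <= k)%N /\
  forall d : {set 'I_n} -> C, \sum_(x : {set 'I_n}) A x x * d x =
     \sum_(T : {set 'I_n}) f T * \sum_(x | x :&: S == T) d x.
Proof.
case=> S [cS [F [HF HA]]]; exists S, (fun T => F T T); split => // d.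
have Ax x : A x x = F (x :&: S) (x :&: S).
  rewrite HA; have -> : [forall i in ~: S, (i \in x) == (i \in x)] by apply/forall_inP => i _.
  by apply: HF => i iS; rewrite inE iS andbT.
rewrite (eq_bigr (fun x => F (x :&: S) (x :&: S) * d x)); last by move=> x _; rewrite Ax.
rewrite (partition_big (fun x => x :&: S) xpredT) //=.
apply: eq_bigr => T _; rewrite mulr_sumr; by apply: eq_big => // x /eqP <-.
Qed.

Lemma lin_seq (s : seq (op C n)) (d : {set 'I_n} -> C) :
  \sum_(x : {set 'I_n}) (\sum_(A <- s) A x x) * d x = \sum_(A <- s) \sum_(x : {set 'I_n}) A x x * d x.
Proof. by under eq_bigr do rewrite mulr_suml; exact: exchange_big. Qed.

Lemma seq_ind (s : seq (op C n)) (L1 L2 : op C n -> C) c :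
  (forall A, List.In A s -> L1 A = c * L2 A) -> \sum_(A <- s) L1 A = c * \sum_(A <- s) L2 A.
Proof.
elim: s => [|a s IH] h; first by rewrite !big_nil mulr0.
rewrite !big_cons mulrDr h /=; last by left.
by rewrite IH // => A hA; apply: h; right.
Qed.

End Aux.

Theorem lemma2 (C : numClosedFieldType) (n k : nat) (H : op C n) :
  (1 <= n)%N -> (k <= n)%N -> sum_of_k_local k H ->
  opTr (opmul H (@Bk C n k)) = (2 ^+ (n - k))^-1 * opTr (opmul H (@Cl C n k)) /\
  (forall r : nat, (k < r)%N -> (r <= n)%N -> opTr (opmul H (@Bk C n r)) = 0).
Proof.
move=> _ _ [s [Hs HH]].
have HT d : \sum_(x : {set 'I_n}) H x x * d x = \sum_(A <- s) \sum_(x : {set 'I_n}) A x x * d x.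
  by rewrite -lin_seq; apply: eq_bigr => x _; rewrite HH.
split.
  rewrite (tr_diag _ (@Bk_diag C n k)) (tr_diag _ (@Cl_diag C n k)) !HT.
  apply: seq_ind => A /Hs /term_decomp [S [f [cS hf]]].
  rewrite !hf mulr_sumr; apply: eq_bigr => T _; rewrite LB // LC //.
  case: ((#|S| == k) && (T \subset S)); last by rewrite !mulr0.
  rewrite natrX mulrCA mulKf //; apply: expf_neq0; by rewrite pnatr_eq0.
move=> r hr _; rewrite (tr_diag _ (@Bk_diag C n r)) HT.
rewrite (seq_ind (c := 0) (L2 := fun _ => 0)) ?mul0r // => A /Hs /term_decomp [S [f [cS hf]]].
rewrite hf big1 // => T _; rewrite LB; last exact: leq_trans cS (ltnW hr).
have -> : (#|S| == r) = false by apply/negbTE; rewrite neq_ltn (leq_ltn_trans cS hr).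
by rewrite mulr0.
Qed.
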